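(* Let $z\in\mathbb D$, $0<R<1$, $0<L<1$, and suppose $\{z_1,\dots,z_k\}$ is an $L$-chain with respect to $\rho$ of the pseudohyperbolic disk $D(z,R)$. Then $$\frac{R^2}{1-R^2}\cdot\frac{1-L^2}{L^2}\le k\le\frac{(2R+L)^2}{1-R^2}\cdot\frac1{L^2}.$$
   Context: $\mathbb D$ open unit disk, $\rho(z,w)=|z-w|/|1-\bar wz|$, $D(z,R)=\{w\in\mathbb D:\rho(w,z)<R\}$. An $L$-chain of a subset $S$ w.r.t. $\rho$ is a maximal subset of $S$ whose distinct points are at $\rho$-distance $\ge L$. *)

(* Defs.v *)
From Stdlib Require Import Reals List.
From Coquelicot Require Import Coquelicot.
Open Scope R_scope.

Definition in_disk (z : C) : Prop := Cmod z < 1.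

Definition rho (z w : C) : R :=
  Cmod (Cminus z w) / Cmod (Cminus (RtoC 1) (Cmult (Cconj w) z)).

Definition pdisk (z : C) (r : R) (w : C) : Prop := in_disk w /\ rho w z < r.

Definition separated (L : R) (A : C -> Prop) : Prop :=
  forall u v, A u -> A v -> u <> v -> L <= rho u v.

Definition is_chain (L : R) (S A : C -> Prop) : Prop :=
  (forall w, A w -> S w) /\ separated L A /\
  (forall B : C -> Prop, (forall w, A w -> B w) -> (forall w, B w -> S w) ->
     separated L B -> forall w, B w -> A w).

(* Main.v *)
Require Import Defs.
From Stdlib Require Import Reals List.
From Coquelicot Require Import Coquelicot.
Open Scope R_scope.
From Stdlib Require Import Lra Psatz Classical.


Lemma Cmod2 (z : C) : Cmod z ^ 2 = fst z ^ 2 + snd z ^ 2.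
Proof. unfold Cmod. rewrite pow2_sqrt; [reflexivity| nra]. Qed.

Lemma Cmod_ge0' z : 0 <= Cmod z.
Proof. apply Cmod_ge_0. Qed.

Lemma lt_sq_iff (p q : R) : 0 <= p -> 0 <= q -> (p < q <-> p ^ 2 < q ^ 2).
Proof. intros; split; intros; nra. Qed.

Lemma rho_sym a b : rho a b = rho b a.
Proof.
  unfold rho, Cmod, Cminus, Cplus, Copp, Cmult, Cconj, RtoC; simpl.
  f_equal; f_equal; ring.
Qed.

Lemma rho_self a : rho a a = 0.
Proof.
  unfold rho. replace (Cminus a a) with (RtoC 0).
  rewrite Cmod_0. unfold Rdiv; ring.
  destruct a; unfold Cminus, Cplus, Copp, RtoC; simpl; f_equal; ring.
Qed.

Lemma id_rho (a b : C) :
  Cmod (Cminus (RtoC 1) (Cmult (Cconj b) a)) ^ 2 - Cmod (Cminus a b) ^ 2 =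
  (1 - Cmod a ^ 2) * (1 - Cmod b ^ 2).
Proof.
  rewrite !Cmod2. destruct a as [u v]; destruct b as [p q].
  unfold Cminus, Cplus, Copp, Cmult, Cconj, RtoC; simpl. ring.
Qed.

Lemma den_gt_num a b : in_disk a -> in_disk b ->
  Cmod (Cminus a b) < Cmod (Cminus (RtoC 1) (Cmult (Cconj b) a)).
Proof.
  unfold in_disk; intros Ha Hb.
  pose proof (id_rho a b). pose proof (Cmod_ge_0 a). pose proof (Cmod_ge_0 b).
  pose proof (Cmod_ge_0 (Cminus a b)).
  pose proof (Cmod_ge_0 (Cminus (RtoC 1) (Cmult (Cconj b) a))).
  assert (0 < (1 - Cmod a ^ 2) * (1 - Cmod b ^ 2)).
  { apply Rmult_lt_0_compat; nra. }
  apply lt_sq_iff; auto. lra.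
Qed.

Lemma den_pos a b : in_disk a -> in_disk b ->
  0 < Cmod (Cminus (RtoC 1) (Cmult (Cconj b) a)).
Proof.
  intros. pose proof (den_gt_num a b H H0). pose proof (Cmod_ge_0 (Cminus a b)). lra.
Qed.

Lemma rho_lt1 a b : in_disk a -> in_disk b -> rho a b < 1.
Proof.
  intros Ha Hb. pose proof (den_pos a b Ha Hb). unfold rho.
  pose proof (den_gt_num a b Ha Hb). apply (Rmult_lt_reg_r (Cmod (Cminus (RtoC 1) (Cmult (Cconj b) a)))); auto.
  unfold Rdiv. rewrite Rmult_assoc, Rinv_l; lra.
Qed.

Lemma rho_ge0 a b : 0 <= rho a b.
Proof.
  unfold rho. destruct (Req_dec (Cmod (Cminus (RtoC 1) (Cmult (Cconj b) a))) 0) as [e|n].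
  rewrite e. unfold Rdiv; rewrite Rinv_0; lra.
  apply Rdiv_le_0_compat; [apply Cmod_ge_0|]. pose proof (Cmod_ge_0 (Cminus (RtoC 1) (Cmult (Cconj b) a))); lra.
Qed.

Lemma Cmod_conj_mult_le (a b : C) :
  Cmod (Cminus (RtoC 1) (Cmult (Cconj b) a)) <= 1 + Cmod a * Cmod b.
Proof.
  eapply Rle_trans. unfold Cminus. apply Cmod_triangle.
  rewrite Cmod_opp, Cmod_mult, Cmod_conj. rewrite Cmod_1. lra.
Qed.

Lemma tri0 a b : in_disk a -> in_disk b ->
  rho a b <= (Cmod a + Cmod b) / (1 + Cmod a * Cmod b).
Proof.
  intros Ha Hb. unfold in_disk in *.
  pose proof (den_pos a b Ha Hb) as Hm.
  set (m := Cmod (Cminus (RtoC 1) (Cmult (Cconj b) a))) in *.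
  set (n := Cmod (Cminus a b)).
  pose proof (id_rho a b) as Hid. fold m n in Hid.
  pose proof (Cmod_conj_mult_le a b) as Hle. fold m in Hle.
  pose proof (Cmod_ge_0 a). pose proof (Cmod_ge_0 b). pose proof (Cmod_ge_0 (Cminus a b)).
  fold n in H1.
  set (p := Cmod a) in *. set (q := Cmod b) in *.
  unfold rho. fold m n.
  assert (Hpq : 0 < 1 + p * q) by nra.
  apply (Rmult_le_reg_r (m * (1 + p*q))). nra.
  replace (n / m * (m * (1 + p * q))) with (n * (1 + p*q)) by (field; lra).
  replace ((p + q) / (1 + p * q) * (m * (1 + p * q))) with ((p+q)*m) by (field; lra).
  assert (Hsq : (n * (1 + p * q)) ^ 2 <= ((p + q) * m) ^ 2).
  { assert (Hk : 0 <= (1 - p^2) * (1 - q^2)) by (apply Rmult_le_pos; nra).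
    assert (Hm2 : m ^ 2 <= (1 + p*q)^2) by nra.
    replace ((n * (1 + p * q)) ^ 2) with ((m^2 - (1 - p ^ 2) * (1 - q ^ 2)) * (1+p*q)^2) by (rewrite <- Hid; ring).
    replace (((p + q) * m) ^ 2) with (m^2 * ((1+p*q)^2 - (1 - p ^ 2) * (1 - q ^ 2))) by ring.
    nra. }
  destruct (Rle_lt_dec (n * (1 + p * q)) ((p + q) * m)) as [h|h]; auto.
  exfalso. assert (0 <= (p+q)*m) by nra. nra.
Qed.


Definition phi (c w : C) : C := Cdiv (Cminus c w) (Cminus (RtoC 1) (Cmult (Cconj c) w)).

Lemma nz_of_pos (z : C) : 0 < Cmod z -> z <> RtoC 0.
Proof. intros H e. rewrite e, Cmod_0 in H. lra. Qed.

Lemma Cmod_swap (a b : C) : Cmod (Cminus a b) = Cmod (Cminus b a).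
Proof. unfold Cmod, Cminus, Cplus, Copp; simpl; f_equal; ring. Qed.

Lemma Cmod_phi c a : in_disk c -> in_disk a -> Cmod (phi c a) = rho a c.
Proof.
  intros Hc Ha. unfold phi, rho. rewrite Cmod_div. rewrite Cmod_swap. reflexivity.
  apply nz_of_pos, den_pos; auto.
Qed.

Lemma conj1 : Cconj (RtoC 1) = RtoC 1.
Proof. unfold Cconj, RtoC; simpl; f_equal; ring. Qed.

Lemma phi_inv c a b : in_disk c -> in_disk a -> in_disk b ->
  rho (phi c a) (phi c b) = rho a b.
Proof.
  intros Hc Ha Hb.
  assert (Na : Cminus (RtoC 1) (Cmult (Cconj c) a) <> RtoC 0) by (apply nz_of_pos, den_pos; auto).
  assert (Nb : Cminus (RtoC 1) (Cmult (Cconj c) b) <> RtoC 0) by (apply nz_of_pos, den_pos; auto).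
  assert (Ecb : Cmod (Cminus (RtoC 1) (Cmult c (Cconj b))) = Cmod (Cminus (RtoC 1) (Cmult (Cconj c) b))).
  { unfold Cmod, Cminus, Cplus, Copp, Cmult, Cconj, RtoC; simpl; f_equal; ring. }
  assert (Nb' : Cminus (RtoC 1) (Cmult c (Cconj b)) <> RtoC 0).
  { apply nz_of_pos. rewrite Ecb. apply den_pos; auto. }
  assert (Kpos : 0 < Cmod (Cminus (RtoC 1) (Cmult c (Cconj c)))).
  { unfold in_disk in Hc. rewrite <- (Cmult_comm (Cconj c) c).
    pose proof (den_pos c c Hc Hc). auto. }
  assert (NK : Cminus (RtoC 1) (Cmult c (Cconj c)) <> RtoC 0) by (apply nz_of_pos; auto).
  assert (E1 : Cminus (phi c a) (phi c b) =
     Cdiv (Cmult (Cminus (RtoC 1) (Cmult c (Cconj c))) (Cminus b a))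
          (Cmult (Cminus (RtoC 1) (Cmult (Cconj c) a)) (Cminus (RtoC 1) (Cmult (Cconj c) b)))).
  { unfold phi. field. split; auto. }
  assert (Cj : Cconj (phi c b) = Cdiv (Cminus (Cconj c) (Cconj b)) (Cminus (RtoC 1) (Cmult c (Cconj b)))).
  { unfold phi. rewrite Cdiv_conj by auto. rewrite !Cminus_conj, Cmult_conj, Cconj_conj, conj1. reflexivity. }
  assert (E2 : Cminus (RtoC 1) (Cmult (Cconj (phi c b)) (phi c a)) =
     Cdiv (Cmult (Cminus (RtoC 1) (Cmult c (Cconj c))) (Cminus (RtoC 1) (Cmult (Cconj b) a)))
          (Cmult (Cminus (RtoC 1) (Cmult c (Cconj b))) (Cminus (RtoC 1) (Cmult (Cconj c) a)))).
  { rewrite Cj. unfold phi. field. split; auto. }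
  unfold rho at 1. rewrite E1, E2.
  rewrite !Cmod_div by (apply Cmult_neq_0; auto).
  rewrite !Cmod_mult. rewrite Ecb. unfold rho. rewrite (Cmod_swap b a).
  pose proof (den_pos a c Ha Hc). pose proof (den_pos b c Hb Hc).
  pose proof (den_pos a b Ha Hb).
  field. repeat split; lra.
Qed.

Lemma phi_disk c a : in_disk c -> in_disk a -> in_disk (phi c a).
Proof. intros. unfold in_disk. rewrite Cmod_phi; auto. apply rho_lt1; auto. Qed.

Lemma tri c a b : in_disk a -> in_disk b -> in_disk c ->
  rho a b <= (rho a c + rho c b) / (1 + rho a c * rho c b).
Proof.
  intros Ha Hb Hc. rewrite <- (phi_inv c a b) by auto.
  rewrite (rho_sym c b). rewrite <- (Cmod_phi c a), <- (Cmod_phi c b) by auto.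
  apply tri0; apply phi_disk; auto.
Qed.


Definition Psi (x y : R) : C :=
  ((x*x+y*y-1)/(x*x+(y+1)^2), -2*x/(x*x+(y+1)^2)).
Definition Dd (a : C) := (1 - fst a)^2 + snd a ^ 2.
Definition alp (a : C) := -2 * snd a / Dd a.
Definition bet (a : C) := (1 - fst a ^ 2 - snd a ^ 2) / Dd a.
Definition cc (b r : R) := b * (1 + r^2) / (1 - r^2).
Definition sK (b r : R) := 2 * r * b / (1 - r^2).

Lemma div_lt1 A E : 0 < E -> A < E -> A / E < 1.
Proof.
  intros. apply (Rmult_lt_reg_r E); auto. replace (A / E * E) with A by (field; lra). lra.
Qed.

Lemma Dd_pos a : in_disk a -> 0 < Dd a.
Proof.
  unfold in_disk; intros H. pose proof (Cmod2 a). pose proof (Cmod_ge_0 a).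
  destruct a as [u v]; unfold Dd; simpl in *.
  assert (u^2 + v^2 < 1) by nra. nra.
Qed.

Lemma bet_pos a : in_disk a -> 0 < bet a.
Proof.
  intros H. pose proof (Dd_pos a H). unfold in_disk in H. pose proof (Cmod2 a). pose proof (Cmod_ge_0 a).
  unfold bet. apply Rdiv_lt_0_compat; auto. nra.
Qed.

Lemma Psi_disk x y : 0 < y -> in_disk (Psi x y).
Proof.
  intros Hy. unfold in_disk.
  assert (HE : 0 < x*x + (y+1)^2) by nra.
  assert (Cmod (Psi x y) ^ 2 < 1).
  { rewrite Cmod2. unfold Psi; cbn [fst snd].
    replace (((x * x + y * y - 1) / (x * x + (y + 1) ^ 2)) ^ 2 + (-2 * x / (x * x + (y + 1) ^ 2)) ^ 2)
      with ((x*x + (y-1)^2) / (x*x + (y+1)^2)) by (field; lra).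
    apply div_lt1; nra. }
  pose proof (Cmod_ge_0 (Psi x y)). nra.
Qed.

Lemma num_eq a x y : in_disk a -> 0 < y ->
  Cmod (Cminus (Psi x y) a) ^ 2 = ((x - alp a)^2 + (y - bet a)^2) * Dd a / (x*x + (y+1)^2).
Proof.
  intros Ha Hy. pose proof (Dd_pos a Ha). assert (HE : 0 < x*x + (y+1)^2) by nra.
  rewrite Cmod2. unfold alp, bet, Psi. revert H. unfold Dd. destruct a as [u v].
  unfold Cminus, Cplus, Copp; simpl. intros H. field. lra.
Qed.

Lemma den_eq a x y : in_disk a -> 0 < y ->
  Cmod (Cminus (RtoC 1) (Cmult (Cconj a) (Psi x y))) ^ 2 =
  ((x - alp a)^2 + (y + bet a)^2) * Dd a / (x*x + (y+1)^2).
Proof.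
  intros Ha Hy. pose proof (Dd_pos a Ha). assert (HE : 0 < x*x + (y+1)^2) by nra.
  rewrite Cmod2. unfold alp, bet, Psi. revert H. unfold Dd. destruct a as [u v].
  unfold Cminus, Cplus, Copp, Cmult, Cconj, RtoC; simpl. intros H. field. lra.
Qed.

Lemma pdisk_iff a r x y : in_disk a -> 0 < r < 1 -> 0 < y ->
  (pdisk a r (Psi x y) <->
   (x - alp a)^2 + (y - cc (bet a) r)^2 < (sK (bet a) r)^2).
Proof.
  intros Ha Hr Hy.
  pose proof (Psi_disk x y Hy) as Hp.
  pose proof (Dd_pos a Ha) as HD. assert (HE : 0 < x*x + (y+1)^2) by nra.
  pose proof (bet_pos a Ha) as Hb.
  pose proof (den_pos (Psi x y) a Hp Ha) as Hden.
  pose proof (num_eq a x y Ha Hy) as En. pose proof (den_eq a x y Ha Hy) as Ed.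
  set (m := Cmod (Cminus (RtoC 1) (Cmult (Cconj a) (Psi x y)))) in *.
  set (n := Cmod (Cminus (Psi x y) a)) in *.
  pose proof (Cmod_ge_0 (Cminus (Psi x y) a)) as Hn. fold n in Hn.
  set (al := alp a) in *. set (b := bet a) in *.
  assert (Hrho : rho (Psi x y) a = n / m) by reflexivity.
  assert (Key : (x - al)^2 + (y - cc b r)^2 - (sK b r)^2 =
     ((x - al)^2 + (y - b)^2 - r^2 * ((x - al)^2 + (y + b)^2)) / (1 - r^2)).
  { unfold cc, sK. field. nra. }
  assert (Hq : 0 < Dd a / (x*x + (y+1)^2)) by (apply Rdiv_lt_0_compat; auto).
  assert (Hr2 : 0 < 1 - r^2) by nra.
  unfold pdisk. rewrite Hrho. split.
  - intros [_ H].
    assert (H1 : n < r * m).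
    { apply (Rmult_lt_reg_r (/ m)). apply Rinv_0_lt_compat; auto.
      rewrite Rmult_assoc, Rinv_r by lra. rewrite Rmult_1_r. exact H. }
    assert (H2 : n ^ 2 < (r * m) ^ 2).
    { assert (0 <= r * m) by nra. apply (proj1 (lt_sq_iff n (r*m) Hn H0)); auto. }
    rewrite Rpow_mult_distr, En, Ed in H2.
    assert (H3 : (x - al)^2 + (y - b)^2 < r^2 * ((x - al)^2 + (y + b)^2)).
    { set (N := (x - al)^2 + (y - b)^2) in *. set (D := (x - al)^2 + (y + b)^2) in *.
      set (Q := Dd a / (x * x + (y + 1) ^ 2)) in *.
      replace (N * Dd a / (x * x + (y + 1) ^ 2)) with (N * Q) in H2 by (unfold Q; field; lra).
      replace (r ^ 2 * (D * Dd a / (x * x + (y + 1) ^ 2))) with ((r^2 * D) * Q) in H2 by (unfold Q; field; lra).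
      apply Rmult_lt_reg_r in H2; auto. }
    assert (H4 : ((x - al)^2 + (y - b)^2 - r^2 * ((x - al)^2 + (y + b)^2)) / (1 - r^2) < 0).
    { apply Rdiv_neg_pos; lra. }
    lra.
  - intros H. split; auto.
    assert (H4 : ((x - al)^2 + (y - b)^2 - r^2 * ((x - al)^2 + (y + b)^2)) / (1 - r^2) < 0) by lra.
    assert (H3 : (x - al)^2 + (y - b)^2 < r^2 * ((x - al)^2 + (y + b)^2)).
    { destruct (Rlt_le_dec ((x - al)^2 + (y - b)^2) (r^2 * ((x - al)^2 + (y + b)^2))); auto.
      exfalso. assert (0 <= ((x - al)^2 + (y - b)^2 - r^2 * ((x - al)^2 + (y + b)^2)) / (1 - r^2)).
      apply Rdiv_le_0_compat; lra. lra. }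
    assert (H2 : n ^ 2 < (r * m) ^ 2).
    { rewrite Rpow_mult_distr, En, Ed.
      set (N := (x - al)^2 + (y - b)^2) in *. set (D := (x - al)^2 + (y + b)^2) in *.
      set (Q := Dd a / (x * x + (y + 1) ^ 2)) in *.
      replace (N * Dd a / (x * x + (y + 1) ^ 2)) with (N * Q) by (unfold Q; field; lra).
      replace (r ^ 2 * (D * Dd a / (x * x + (y + 1) ^ 2))) with ((r^2 * D) * Q) by (unfold Q; field; lra).
      apply Rmult_lt_compat_r; auto. }
    assert (H1 : n < r * m).
    { assert (0 <= r * m) by nra. apply (proj2 (lt_sq_iff n (r*m) Hn H0)); auto. }
    apply (Rmult_lt_reg_r m); auto. unfold Rdiv. rewrite Rmult_assoc, Rinv_l by lra. lra.
Qed.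


Definition chi (al c s x y : R) : R :=
  if Rlt_dec ((x - al)^2 + (y - c)^2) (s^2) then 1 else 0.
Definition gfun (al b s x : R) : R := 2 * sqrt (s^2 - (x - al)^2) / (b^2 + (x - al)^2).

Lemma is_RInt_eqv (f : R -> R) a b (l lp : R) : is_RInt f a b l -> l = lp -> is_RInt f a b lp.
Proof. intros H e; subst; auto. Qed.

Lemma is_RInt_extR (f g : R -> R) a b (l : R) :
  (forall x : R, Rmin a b < x < Rmax a b -> f x = g x) -> is_RInt f a b l -> is_RInt g a b l.
Proof. apply is_RInt_ext. Qed.

Lemma is_RInt_zero (f : R -> R) a b : a <= b -> (forall y, a < y < b -> f y = 0) -> is_RInt f a b 0.
Proof.
  intros Hab H. apply is_RInt_extR with (fun _ => 0).
  { intros y Hy. rewrite Rmin_left, Rmax_right in Hy by lra. symmetry; apply H; auto. }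
  eapply is_RInt_eqv. apply is_RInt_const. unfold scal; simpl. unfold mult; simpl. ring.
Qed.

Lemma sq_lt h t : 0 < h -> -h < t < h -> t^2 < h^2.
Proof. intros. nra. Qed.
Lemma sq_gt h t : 0 < h -> (t < -h \/ h < t) -> h^2 < t^2.
Proof. intros H [H1|H1]; nra. Qed.

Lemma cs_facts b r : 0 < b -> 0 < r < 1 ->
  0 < cc b r - sK b r /\ (cc b r)^2 - (sK b r)^2 = b^2 /\ 0 < sK b r.
Proof.
  intros Hb Hr. assert (0 < 1 - r^2) by nra. unfold cc, sK. repeat split.
  - replace (b * (1 + r ^ 2) / (1 - r ^ 2) - 2 * r * b / (1 - r ^ 2)) with (b * (1-r)^2/(1-r^2)) by (field; lra).
    apply Rdiv_lt_0_compat; [apply Rmult_lt_0_compat; [lra | apply pow_lt; lra] | lra].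
  - field. lra.
  - apply Rdiv_lt_0_compat; nra.
Qed.

Lemma inner_int al b r x Y1 Y2 : 0 < b -> 0 < r < 1 -> 0 < Y1 -> Y1 <= cc b r - sK b r ->
  cc b r + sK b r <= Y2 ->
  is_RInt (fun y => chi al (cc b r) (sK b r) x y / y^2) Y1 Y2 (gfun al b (sK b r) x).
Proof.
  intros Hb Hr HY1 H1 H2.
  destruct (cs_facts b r Hb Hr) as [Hcs [Hc2 Hs]].
  set (c := cc b r) in *. set (s := sK b r) in *.
  set (d := s^2 - (x - al)^2).
  destruct (Rle_lt_dec d 0) as [Hd|Hd].
  - eapply is_RInt_eqv. apply is_RInt_zero. lra.
    intros y Hy. unfold chi. destruct (Rlt_dec _ _); [|unfold Rdiv; ring].
    exfalso. unfold d in Hd. pose proof (pow2_ge_0 (y - c)). lra.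
    unfold gfun. fold d. rewrite sqrt_neg_0 by auto. unfold Rdiv; ring.
  - set (h := sqrt d).
    assert (Hh : 0 < h) by (apply sqrt_lt_R0; auto).
    assert (Hh2 : h^2 = d) by (unfold h; rewrite pow2_sqrt; lra).
    assert (Hhs : h <= s).
    { assert (d <= s^2) by (unfold d; pose proof (pow2_ge_0 (x - al)); lra). destruct (Rle_lt_dec h s); auto.
      exfalso. assert (s * s < h * h) by (apply Rmult_le_0_lt_compat; lra). simpl in Hh2, H. lra. }
    eapply is_RInt_eqv.
    apply (is_RInt_Chasles _ Y1 (c + h) Y2). apply (is_RInt_Chasles _ Y1 (c - h) (c + h)).
    + apply (is_RInt_zero _ Y1 (c - h)). lra.
      intros y Hy. unfold chi. destruct (Rlt_dec _ _); [|unfold Rdiv; ring].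
      exfalso. unfold d in Hh2. pose proof (sq_gt h (y - c) Hh ltac:(lra)). lra.
    + apply is_RInt_extR with (fun y => / y^2).
      { intros y Hy. rewrite Rmin_left, Rmax_right in Hy by lra. unfold chi.
        destruct (Rlt_dec _ _) as [_|n]. unfold Rdiv; ring.
        exfalso; apply n. unfold d in Hh2. pose proof (sq_lt h (y - c) Hh ltac:(lra)). lra. }
      apply (is_RInt_derive (fun y => - / y)).
      * intros y Hy. rewrite Rmin_left, Rmax_right in Hy by lra.
        auto_derive. lra. field. lra.
      * intros y Hy. rewrite Rmin_left, Rmax_right in Hy by lra.
        apply (@ex_derive_continuous R_AbsRing R_NormedModule (fun y => / y^2)). auto_derive. apply Rgt_not_eq. nra.
    + apply (is_RInt_zero _ (c + h) Y2). lra.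
      intros y Hy. unfold chi. destruct (Rlt_dec _ _); [|unfold Rdiv; ring].
      exfalso. unfold d in Hh2. pose proof (sq_gt h (y - c) Hh ltac:(lra)). lra.
    + unfold plus, minus, opp; simpl. unfold gfun. fold d. fold h.
      assert (E : b^2 + (x - al)^2 = (c - h) * (c + h)).
      { unfold d in Hh2. rewrite <- Hc2. replace ((c - h) * (c + h)) with (c^2 - h^2) by ring. lra. }
      rewrite E. unfold plus; simpl. field. lra.
Qed.


Definition hh (T t : R) := (T - 1) * sin t * cos t / (cos t ^ 2 + T * sin t ^ 2).
Definition FF (T t : R) := 2 * T * (t + atan (hh T t)) - 2 * t.

Lemma Dpos T t : 1 < T -> 0 < cos t ^ 2 + T * sin t ^ 2.
Proof.
  intros HT. pose proof (sin2_cos2 t). unfold Rsqr in H.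
  pose proof (pow2_ge_0 (sin t)). pose proof (pow2_ge_0 (cos t)). nra.
Qed.

Lemma hh_derive T t : 1 < T ->
  is_derive (hh T) t
   (((T - 1) * (cos t ^ 2 - sin t ^ 2) * (cos t ^ 2 + T * sin t ^ 2)
     - (T - 1) * sin t * cos t * (2 * (T - 1) * sin t * cos t))
     / (cos t ^ 2 + T * sin t ^ 2) ^ 2).
Proof.
  intros HT. pose proof (Dpos T t HT). unfold hh. auto_derive. lra.
  field. lra.
Qed.

Lemma FF_derive T t : 1 < T ->
  is_derive (FF T) t (2 * (T^2 - 1) * cos t ^ 2 / (cos t ^ 2 + T^2 * sin t ^ 2)).
Proof.
  intros HT. pose proof (Dpos T t HT) as HD.
  pose proof (hh_derive T t HT) as HA.
  unfold FF. auto_derive.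
  - eexists. exact HA.
  - match goal with |- context [Derive ?f t] => rewrite (is_derive_unique f t _ HA) end.
    unfold hh, Rsqr.
    assert (HD2 : 0 < cos t ^ 2 + T^2 * sin t ^ 2).
    { pose proof (sin2_cos2 t). unfold Rsqr in H.
      pose proof (pow2_ge_0 (sin t)). pose proof (pow2_ge_0 (cos t)). nra. }
    assert (Hsc : cos t ^ 2 + sin t ^ 2 = 1).
    { pose proof (sin2_cos2 t). unfold Rsqr in H. lra. }
    set (S := sin t) in *. set (Co := cos t) in *.
    assert (HN : 0 < (Co ^ 2 + T * S ^ 2)^2 + ((T - 1) * S * Co)^2) by nra.
    field. repeat split; try lra.
Qed.


Definition TT (r : R) := (1 + r^2) / (1 - r^2).

Lemma TT_gt1 r : 0 < r < 1 -> 1 < TT r.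
Proof.
  intros Hr. unfold TT. assert (0 < 1 - r^2) by nra.
  apply (Rmult_lt_reg_r (1 - r^2)); auto. unfold Rdiv. rewrite Rmult_assoc, Rinv_l by lra. nra.
Qed.

Lemma comp_int al b r : 0 < b -> 0 < r < 1 ->
  is_RInt (fun t => scal (sK b r * cos t) (gfun al b (sK b r) (al + sK b r * sin t)))
    (-(PI/2)) (PI/2) (4 * PI * (r^2 / (1 - r^2))).
Proof.
  intros Hb Hr. assert (Hr2 : 0 < 1 - r^2) by nra.
  pose proof (TT_gt1 r Hr) as HT.
  assert (Hs : 0 < sK b r) by (unfold sK; apply Rdiv_lt_0_compat; nra).
  apply is_RInt_extR with (fun t => 2 * (TT r ^2 - 1) * cos t ^ 2 / (cos t ^ 2 + TT r ^2 * sin t ^ 2)).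
  { intros t Ht. rewrite Rmin_left, Rmax_right in Ht by (pose proof PI_RGT_0; lra).
    assert (Hc : 0 < cos t) by (apply cos_gt_0; lra).
    assert (Hsc : cos t ^ 2 + sin t ^ 2 = 1).
    { pose proof (sin2_cos2 t). unfold Rsqr in H. lra. }
    change (scal (sK b r * cos t) ?X) with (sK b r * cos t * X). unfold gfun.
    replace (sK b r ^ 2 - (al + sK b r * sin t - al) ^ 2) with ((sK b r * cos t)^2)
      by (replace (sK b r ^2) with (sK b r ^2 * (cos t ^2 + sin t^2)) at 1 by (rewrite Hsc; ring); ring).
    rewrite sqrt_pow2 by nra.
    replace (cos t ^ 2 + TT r ^ 2 * sin t ^ 2) with (1 + (TT r ^ 2 - 1) * sin t ^ 2) by lra.
    replace (al + sK b r * sin t - al) with (sK b r * sin t) by ring.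
    unfold TT, sK. pose proof (pow2_ge_0 (sin t)).
    assert (0 < (b * (1 - r^2))^2) by (apply pow_lt; nra).
    assert (0 < (1 - r^2)^2) by (apply pow_lt; nra).
    field. split; [lra|]. split.
    - apply Rgt_not_eq. pose proof (pow2_ge_0 (2 * r * b * sin t)). lra.
    - apply Rgt_not_eq. assert (0 <= ((1 + r ^ 2) ^ 2 - (1 - r ^ 2) ^ 2) * sin t ^ 2).
      apply Rmult_le_pos; nra. lra. }
  eapply is_RInt_eqv.
  apply (is_RInt_derive (FF (TT r))).
  - intros t _. apply FF_derive; auto.
  - intros t _. apply (@ex_derive_continuous R_AbsRing R_NormedModule).
    pose proof (Dpos (TT r ^ 2) t ltac:(nra)).
    auto_derive. lra.
  - unfold minus, plus, opp; simpl. unfold FF, hh.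
    rewrite sin_neg, cos_neg, sin_PI2, cos_PI2.
    replace ((TT r - 1) * 1 * 0 / (0 ^ 2 + TT r * 1 ^ 2)) with 0 by (field; lra).
    replace ((TT r - 1) * - (1) * 0 / (0 ^ 2 + TT r * (- (1)) ^ 2)) with 0 by (field; lra).
    rewrite atan_0. unfold TT. field. lra.
Qed.

Lemma gfun_cont al b s x : 0 < b -> continuous (gfun al b s) x.
Proof.
  intros Hb. unfold gfun, Rdiv.
  apply (continuous_mult (fun x => 2 * sqrt (s^2 - (x - al)^2)) (fun x => / (b^2 + (x - al)^2))).
  - apply (continuous_mult (fun _ => 2) (fun x => sqrt (s^2 - (x - al)^2))).
    apply continuous_const.
    apply continuous_sqrt_comp.
    apply (@ex_derive_continuous R_AbsRing R_NormedModule). auto_derive. auto.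
  - apply continuous_Rinv_comp.
    apply (@ex_derive_continuous R_AbsRing R_NormedModule). auto_derive. auto.
    apply Rgt_not_eq. pose proof (pow2_ge_0 (x - al)). pose proof (pow_lt b 2 Hb). lra.
Qed.

Lemma outer_int al b r X1 X2 : 0 < b -> 0 < r < 1 -> X1 <= al - sK b r -> al + sK b r <= X2 ->
  is_RInt (gfun al b (sK b r)) X1 X2 (4 * PI * (r^2 / (1 - r^2))).
Proof.
  intros Hb Hr H1 H2.
  assert (Hs : 0 < sK b r) by (unfold sK; apply Rdiv_lt_0_compat; nra).
  set (s := sK b r) in *.
  assert (Hmid : is_RInt (gfun al b s) (al - s) (al + s) (4 * PI * (r^2 / (1 - r^2)))).
  { pose proof (RInt_comp (gfun al b s) (fun t => al + s * sin t) (fun t => s * cos t) (-(PI/2)) (PI/2)) as E.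
    cbv beta in E. rewrite sin_neg, sin_PI2 in E.
    replace (al + s * - (1)) with (al - s) in E by ring.
    replace (al + s * 1) with (al + s) in E by ring.
    assert (E' : RInt (fun y => scal (s * cos y) (gfun al b s (al + s * sin y))) (-(PI/2)) (PI/2)
               = RInt (gfun al b s) (al - s) (al + s)).
    { apply E.
      - intros; apply gfun_cont; auto.
      - intros t _. split. auto_derive. auto. ring.
        apply (@ex_derive_continuous R_AbsRing R_NormedModule). auto_derive. auto. }
    pose proof (comp_int al b r Hb Hr) as CI. fold s in CI.
    rewrite (is_RInt_unique _ _ _ _ CI) in E'.
    rewrite E'.
    apply (RInt_correct (gfun al b s)).
    apply ex_RInt_continuous. intros; apply gfun_cont; auto. }
  eapply is_RInt_eqv.
  apply (is_RInt_Chasles _ X1 (al + s) X2). apply (is_RInt_Chasles _ X1 (al - s) (al + s)).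
  - apply is_RInt_zero. lra. intros x Hx. unfold gfun. rewrite sqrt_neg_0. unfold Rdiv; ring.
    pose proof (sq_gt s (x - al) Hs ltac:(lra)). lra.
  - exact Hmid.
  - apply is_RInt_zero. lra. intros x Hx. unfold gfun. rewrite sqrt_neg_0. unfold Rdiv; ring.
    pose proof (sq_gt s (x - al) Hs ltac:(lra)). lra.
  - unfold plus; simpl. ring.
Qed.


Definition chiD (a : C) (r x y : R) : R := chi (alp a) (cc (bet a) r) (sK (bet a) r) x y.

Definition inbox (a : C) (r X1 X2 Y1 Y2 : R) : Prop :=
  X1 <= alp a - sK (bet a) r /\ alp a + sK (bet a) r <= X2 /\
  Y1 <= cc (bet a) r - sK (bet a) r /\ cc (bet a) r + sK (bet a) r <= Y2.

Lemma mass a r X1 X2 Y1 Y2 : in_disk a -> 0 < r < 1 -> 0 < Y1 -> inbox a r X1 X2 Y1 Y2 ->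
  is_RInt (fun x => RInt (fun y => chiD a r x y / y^2) Y1 Y2) X1 X2 (4 * PI * (r^2 / (1 - r^2))).
Proof.
  intros Ha Hr HY [H1 [H2 [H3 H4]]].
  pose proof (bet_pos a Ha) as Hb.
  apply is_RInt_extR with (gfun (alp a) (bet a) (sK (bet a) r)).
  - intros x _. symmetry. apply is_RInt_unique. unfold chiD. apply inner_int; auto.
  - apply outer_int; auto.
Qed.

Lemma chiD_01 a r x y : chiD a r x y = 0 \/ chiD a r x y = 1.
Proof. unfold chiD, chi. destruct (Rlt_dec _ _); auto. Qed.

Lemma chiD_iff a r x y : in_disk a -> 0 < r < 1 -> 0 < y ->
  (chiD a r x y = 1 <-> pdisk a r (Psi x y)).
Proof.
  intros Ha Hr Hy. rewrite (pdisk_iff a r x y Ha Hr Hy). unfold chiD, chi.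
  destruct (Rlt_dec _ _); split; intros; auto; try lra.
Qed.

Definition sumf (l : list C) (f : C -> R) : R := fold_right (fun w acc => f w + acc) 0 l.

Lemma is_RInt_sumf (l : list C) (F : C -> R -> R) (v : C -> R) a b :
  (forall w, In w l -> is_RInt (F w) a b (v w)) ->
  is_RInt (fun t => sumf l (fun w => F w t)) a b (sumf l v).
Proof.
  induction l as [|w l IH]; intros H; simpl.
  - eapply is_RInt_eqv. apply is_RInt_const. unfold scal; simpl; unfold mult; simpl; ring.
  - apply (is_RInt_plus (F w) (fun t => sumf l (fun w => F w t))).
    apply H; simpl; auto. apply IH. intros; apply H; simpl; auto.
Qed.

Lemma sumf_const l k : sumf l (fun _ => k) = INR (length l) * k.
Proof. induction l; unfold sumf in *; cbn [fold_right length] in *. simpl; ring. rewrite IHl, S_INR. ring. Qed.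

Lemma sumf_ge_elem l f w : (forall u, In u l -> 0 <= f u) -> In w l -> f w <= sumf l f.
Proof.
  induction l as [|u l IH]; simpl; intros H Hw. contradiction.
  assert (Hn : 0 <= sumf l f).
  { clear IH Hw. induction l; simpl. lra. assert (0 <= f a) by (apply H; simpl; auto).
    assert (0 <= sumf l f) by (apply IHl; intros; apply H; simpl in *; tauto). lra. }
  destruct Hw as [e|Hw]. subst. lra.
  assert (0 <= f u) by auto. assert (f w <= sumf l f) by (apply IH; auto). lra.
Qed.

Lemma sumf_nonneg l f : (forall u, In u l -> 0 <= f u) -> 0 <= sumf l f.
Proof.
  induction l; simpl; intros H. lra.
  assert (0 <= f a) by auto. assert (0 <= sumf l f) by auto. lra.
Qed.

Lemma sumf_div l f d : sumf l (fun w => f w / d) = sumf l f / d.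
Proof. induction l; simpl. unfold Rdiv; ring. rewrite IHl. unfold Rdiv; ring. Qed.

Lemma sumf_zero l f : (forall w, In w l -> f w = 0) -> sumf l f = 0.
Proof. induction l; simpl; intros H. auto. rewrite H, IHl; auto. ring. Qed.

Lemma sumf_le1 l f : NoDup l -> (forall w, In w l -> f w = 0 \/ f w = 1) ->
  (forall u v, In u l -> In v l -> u <> v -> f u = 1 -> f v = 1 -> False) -> sumf l f <= 1.
Proof.
  induction l as [|w l IH]; simpl; intros Hnd H01 Hx. lra.
  inversion Hnd; subst.
  destruct (H01 w (or_introl eq_refl)) as [e|e].
  - rewrite e. assert (sumf l f <= 1). { apply IH; auto. intros u v Hu Hv; apply Hx; auto. } lra.
  - rewrite sumf_zero. lra. intros v Hv. destruct (H01 v (or_intror Hv)) as [e'|e']; auto.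
    exfalso. apply (Hx w v); auto. intro; subst; contradiction.
Qed.

Lemma ub_list (h : C -> R) l : exists M, forall w, In w l -> h w <= M.
Proof.
  induction l as [|u l [M HM]]. exists 0; intros w [].
  exists (Rmax (h u) M). intros w [e|Hw]. subst; apply Rmax_l.
  eapply Rle_trans. apply HM; auto. apply Rmax_r.
Qed.

Lemma lb_list (h : C -> R) l : (forall w, In w l -> 0 < h w) ->
  exists m, 0 < m /\ forall w, In w l -> m <= h w.
Proof.
  induction l as [|u l IH]; intros H. exists 1; split; [lra| intros w []].
  destruct IH as [m [Hm HM]]. intros; apply H; simpl; auto.
  exists (Rmin (h u) m). split. apply Rmin_glb_lt; auto. apply H; simpl; auto.
  intros w [e|Hw]. subst; apply Rmin_l. eapply Rle_trans. apply Rmin_r. auto.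
Qed.


Lemma box_exists z r0 l r1 : in_disk z -> 0 < r0 < 1 -> (forall w, In w l -> in_disk w) -> 0 < r1 < 1 ->
  exists X1 X2 Y1 Y2, 0 < Y1 /\ inbox z r0 X1 X2 Y1 Y2 /\ forall w, In w l -> inbox w r1 X1 X2 Y1 Y2.
Proof.
  intros Hz Hr0 Hl Hr1.
  destruct (ub_list (fun w => - (alp w - sK (bet w) r1)) l) as [M1 HM1].
  destruct (ub_list (fun w => alp w + sK (bet w) r1) l) as [M2 HM2].
  destruct (ub_list (fun w => cc (bet w) r1 + sK (bet w) r1) l) as [M3 HM3].
  destruct (lb_list (fun w => cc (bet w) r1 - sK (bet w) r1) l) as [m [Hm HMm]].
  { intros w Hw. destruct (cs_facts (bet w) r1 (bet_pos w (Hl w Hw)) Hr1) as [h _]. exact h. }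
  destruct (cs_facts (bet z) r0 (bet_pos z Hz) Hr0) as [hz _].
  exists (- Rmax M1 (- (alp z - sK (bet z) r0))), (Rmax M2 (alp z + sK (bet z) r0)),
    (Rmin m (cc (bet z) r0 - sK (bet z) r0)), (Rmax M3 (cc (bet z) r0 + sK (bet z) r0)).
  split. apply Rmin_glb_lt; auto.
  split.
  - unfold inbox. repeat split.
    + pose proof (Rmax_r M1 (- (alp z - sK (bet z) r0))). lra.
    + apply Rmax_r.
    + apply Rmin_r.
    + apply Rmax_r.
  - intros w Hw. unfold inbox. repeat split.
    + pose proof (Rmax_l M1 (- (alp z - sK (bet z) r0))). pose proof (HM1 w Hw). simpl in *. lra.
    + eapply Rle_trans. apply (HM2 w Hw). apply Rmax_l.
    + eapply Rle_trans. apply Rmin_l. apply (HMm w Hw).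
    + eapply Rle_trans. apply (HM3 w Hw). apply Rmax_l.
Qed.

Lemma f_mono x y x' y' : 0 <= x -> x < x' -> x' < 1 -> 0 <= y -> y < y' -> y' < 1 ->
  (x + y) / (1 + x * y) < (x' + y') / (1 + x' * y').
Proof.
  intros. assert (0 < 1 + x*y) by nra. assert (0 < 1 + x'*y') by nra.
  apply (Rmult_lt_reg_r ((1 + x*y) * (1 + x'*y'))). nra.
  replace ((x + y) / (1 + x * y) * ((1 + x * y) * (1 + x' * y'))) with ((x + y) * (1 + x' * y')) by (field; lra).
  replace ((x' + y') / (1 + x' * y') * ((1 + x * y) * (1 + x' * y'))) with ((x' + y') * (1 + x * y)) by (field; lra).
  assert ((x' + y') * (1 + x * y) - (x + y) * (1 + x' * y') = (x' - x) * (1 - y * y') + (y' - y) * (1 - x * x')) by ring.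
  assert (0 < (x' - x) * (1 - y * y')) by (apply Rmult_lt_0_compat; nra).
  assert (0 <= (y' - y) * (1 - x * x')) by (apply Rmult_le_pos; nra).
  lra.
Qed.

Lemma f_le_sum x y : 0 <= x -> 0 <= y -> (x + y) / (1 + x * y) <= x + y.
Proof.
  intros. assert (0 < 1 + x*y) by nra.
  apply (Rmult_le_reg_r (1 + x*y)); auto.
  replace ((x + y) / (1 + x * y) * (1 + x * y)) with (x + y) by (field; lra). nra.
Qed.

Lemma is_RInt_RInt (f : R -> R) a b (l : R) : is_RInt f a b l -> is_RInt f a b (RInt f a b).
Proof. intros H. rewrite (is_RInt_unique f a b l H). exact H. Qed.

Definition AA (r : R) := r^2 / (1 - r^2).

Theorem lemma4p2 (z : C) (R0 L : R) (zs : list C) :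
  in_disk z -> 0 < R0 < 1 -> 0 < L < 1 ->
  NoDup zs ->
  is_chain L (pdisk z R0) (fun w => In w zs) ->
  R0 ^ 2 / (1 - R0 ^ 2) * ((1 - L ^ 2) / L ^ 2) <= INR (length zs) /\
  INR (length zs) <= (2 * R0 + L) ^ 2 / (1 - R0 ^ 2) * (1 / L ^ 2).
Proof.
  intros Hz HR HL Hnd [Hsub [Hsep Hmax]].
  assert (Hzs : forall w, In w zs -> in_disk w) by (intros w Hw; apply (Hsub w Hw)).
  assert (HzsR : forall w, In w zs -> rho w z < R0) by (intros w Hw; apply (Hsub w Hw)).
  assert (Hcov : forall p, pdisk z R0 p -> exists w, In w zs /\ rho p w < L).
  { intros p Hp. apply NNPP. intros Hno.
    assert (Hall : forall w, In w zs -> L <= rho p w).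
    { intros w Hw. destruct (Rlt_le_dec (rho p w) L); auto. exfalso; apply Hno; eauto. }
    assert (Hin : In p zs).
    { apply (Hmax (fun w => In w zs \/ w = p)); auto.
      - intros w [Hw|e]; [apply Hsub; auto| subst; auto].
      - intros u v [Hu|eu] [Hv|ev] Huv.
        + apply Hsep; auto.
        + subst. rewrite rho_sym. apply Hall; auto.
        + subst. apply Hall; auto.
        + subst. contradiction. }
    pose proof (Hall p Hin). rewrite rho_self in H. lra. }
  assert (HPI : 0 < PI) by apply PI_RGT_0.
  assert (HA : forall r, 0 < r < 1 -> 0 < AA r).
  { intros r Hr. unfold AA. apply Rdiv_lt_0_compat; nra. }
  split.
  -
    destruct (box_exists z R0 zs L Hz HR Hzs HL) as [X1 [X2 [Y1 [Y2 [HY [Hbz Hbw]]]]]].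
    assert (HX : X1 <= X2) by (destruct Hbz as [h1 [h2 _]]; pose proof (cs_facts _ R0 (bet_pos z Hz) HR); lra).
    assert (HYY : Y1 <= Y2) by (destruct Hbz as [_ [_ [h3 h4]]]; pose proof (cs_facts _ R0 (bet_pos z Hz) HR); lra).
    pose proof (mass z R0 X1 X2 Y1 Y2 Hz HR HY Hbz) as Hbig.
    pose proof (is_RInt_sumf zs (fun w x => RInt (fun y => chiD w L x y / y^2) Y1 Y2)
                  (fun _ => 4 * PI * (L^2 / (1 - L^2))) X1 X2
                  (fun w Hw => mass w L X1 X2 Y1 Y2 (Hzs w Hw) HL HY (Hbw w Hw))) as Hsm.
    assert (Hle : 4 * PI * (R0^2 / (1 - R0^2)) <= sumf zs (fun _ => 4 * PI * (L^2 / (1 - L^2)))).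
    { apply (is_RInt_le _ _ X1 X2 _ _ HX Hbig Hsm).
      intros x Hx.
      assert (Hi1 : is_RInt (fun y => chiD z R0 x y / y^2) Y1 Y2
                      (RInt (fun y => chiD z R0 x y / y^2) Y1 Y2)).
      { eapply is_RInt_RInt. unfold chiD. destruct Hbz as [_ [_ [h3 h4]]].
        apply inner_int; auto. apply bet_pos; auto. }
      assert (Hi2 : is_RInt (fun y => sumf zs (fun w => chiD w L x y / y^2)) Y1 Y2
                      (sumf zs (fun w => RInt (fun y => chiD w L x y / y^2) Y1 Y2))).
      { apply (is_RInt_sumf zs (fun w y => chiD w L x y / y^2)).
        intros w Hw. eapply is_RInt_RInt. unfold chiD.
        destruct (Hbw w Hw) as [_ [_ [h3 h4]]].
        apply inner_int; auto. apply bet_pos; auto. }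
      apply (is_RInt_le _ _ Y1 Y2 _ _ HYY Hi1 Hi2).
      intros y Hy. rewrite sumf_div.
      assert (Hy2 : 0 < y^2) by (apply pow_lt; lra).
      apply Rmult_le_compat_r. left; apply Rinv_0_lt_compat; auto.
      destruct (chiD_01 z R0 x y) as [e|e]; rewrite e.
      + apply sumf_nonneg. intros u _. destruct (chiD_01 u L x y) as [e'|e']; rewrite e'; lra.
      + apply chiD_iff in e; auto; try lra.
        destruct (Hcov _ e) as [w [Hw Hpw]].
        assert (chiD w L x y = 1).
        { apply chiD_iff; auto. lra. split. apply Psi_disk; lra. auto. }
        rewrite <- H. apply (sumf_ge_elem zs (fun w => chiD w L x y)); auto.
        intros u _. destruct (chiD_01 u L x y) as [e'|e']; rewrite e'; lra. }
    rewrite sumf_const in Hle.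
    assert (H4 : 0 < 4 * PI * (L ^ 2 / (1 - L ^ 2))) by (pose proof (HA L HL); unfold AA in *; nra).
    replace (R0 ^ 2 / (1 - R0 ^ 2) * ((1 - L ^ 2) / L ^ 2)) with
      ((4 * PI * (R0 ^ 2 / (1 - R0 ^ 2))) / (4 * PI * (L ^ 2 / (1 - L ^ 2)))).
    2: { field. repeat split; try nra. }
    apply (Rmult_le_reg_r (4 * PI * (L ^ 2 / (1 - L ^ 2)))); auto.
    replace (4 * PI * (R0 ^ 2 / (1 - R0 ^ 2)) / (4 * PI * (L ^ 2 / (1 - L ^ 2))) * (4 * PI * (L ^ 2 / (1 - L ^ 2))))
      with (4 * PI * (R0 ^ 2 / (1 - R0 ^ 2))) by (field; repeat split; nra).
    exact Hle.
  -
    set (s := (L/2 + R0) / (1 + L/2 * R0)).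
    assert (Hs : 0 < s < 1).
    { unfold s. assert (0 < 1 + L/2*R0) by nra. split. apply Rdiv_lt_0_compat; lra.
      apply div_lt1; nra. }
    assert (HL2 : 0 < L/2 < 1) by lra.
    destruct (box_exists z s zs (L/2) Hz Hs Hzs HL2) as [X1 [X2 [Y1 [Y2 [HY [Hbz Hbw]]]]]].
    assert (HX : X1 <= X2) by (destruct Hbz as [h1 [h2 _]]; pose proof (cs_facts _ s (bet_pos z Hz) Hs); lra).
    assert (HYY : Y1 <= Y2) by (destruct Hbz as [_ [_ [h3 h4]]]; pose proof (cs_facts _ s (bet_pos z Hz) Hs); lra).
    pose proof (mass z s X1 X2 Y1 Y2 Hz Hs HY Hbz) as Hbig.
    pose proof (is_RInt_sumf zs (fun w x => RInt (fun y => chiD w (L/2) x y / y^2) Y1 Y2)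
                  (fun _ => 4 * PI * ((L/2)^2 / (1 - (L/2)^2))) X1 X2
                  (fun w Hw => mass w (L/2) X1 X2 Y1 Y2 (Hzs w Hw) HL2 HY (Hbw w Hw))) as Hsm.
    assert (Hle : sumf zs (fun _ => 4 * PI * ((L/2)^2 / (1 - (L/2)^2))) <= 4 * PI * (s^2 / (1 - s^2))).
    { apply (is_RInt_le _ _ X1 X2 _ _ HX Hsm Hbig).
      intros x Hx.
      assert (Hi1 : is_RInt (fun y => chiD z s x y / y^2) Y1 Y2
                      (RInt (fun y => chiD z s x y / y^2) Y1 Y2)).
      { eapply is_RInt_RInt. unfold chiD. destruct Hbz as [_ [_ [h3 h4]]].
        apply inner_int; auto. apply bet_pos; auto. }
      assert (Hi2 : is_RInt (fun y => sumf zs (fun w => chiD w (L/2) x y / y^2)) Y1 Y2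
                      (sumf zs (fun w => RInt (fun y => chiD w (L/2) x y / y^2) Y1 Y2))).
      { apply (is_RInt_sumf zs (fun w y => chiD w (L/2) x y / y^2)).
        intros w Hw. eapply is_RInt_RInt. unfold chiD.
        destruct (Hbw w Hw) as [_ [_ [h3 h4]]].
        apply inner_int; auto. apply bet_pos; auto. }
      apply (is_RInt_le _ _ Y1 Y2 _ _ HYY Hi2 Hi1).
      intros y Hy. rewrite sumf_div.
      assert (Hy2 : 0 < y^2) by (apply pow_lt; lra).
      assert (Hyp : 0 < y) by lra.
      pose proof (Psi_disk x y Hyp) as Hpd.
      apply Rmult_le_compat_r. left; apply Rinv_0_lt_compat; auto.
      assert (Hcont : forall w, In w zs -> chiD w (L/2) x y = 1 -> chiD z s x y = 1).
      { intros w Hw e. apply chiD_iff in e; auto. apply chiD_iff; auto. split; auto.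
        destruct e as [_ e].
        eapply Rle_lt_trans. apply (tri w); auto.
        replace s with ((L/2 + R0) / (1 + L/2 * R0)) by reflexivity.
        apply f_mono; auto; try apply rho_ge0; try lra. }
      destruct (chiD_01 z s x y) as [e|e]; rewrite e.
      + rewrite sumf_zero. lra. intros w Hw.
        destruct (chiD_01 w (L/2) x y) as [e'|e']; auto.
        rewrite (Hcont w Hw e') in e. lra.
      + apply sumf_le1; auto.
        intros w _; apply chiD_01.
        intros u v Hu Hv Huv eu ev.
        apply chiD_iff in eu; auto. apply chiD_iff in ev; auto.
        destruct eu as [_ eu]. destruct ev as [_ ev].
        pose proof (Hsep u v Hu Hv Huv) as Hsp.
        pose proof (tri (Psi x y) u v (Hzs u Hu) (Hzs v Hv) Hpd) as Ht.
        rewrite (rho_sym u (Psi x y)) in Ht.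
        pose proof (f_le_sum (rho (Psi x y) u) (rho (Psi x y) v) (rho_ge0 _ _) (rho_ge0 _ _)).
        lra. }
    rewrite sumf_const in Hle.
    assert (H4 : 0 < 4 * PI * ((L/2) ^ 2 / (1 - (L/2) ^ 2))) by (pose proof (HA (L/2) HL2); unfold AA in *; nra).
    assert (Hk : INR (length zs) <= (4 * PI * (s ^ 2 / (1 - s ^ 2))) / (4 * PI * ((L/2) ^ 2 / (1 - (L/2) ^ 2)))).
    { apply (Rmult_le_reg_r (4 * PI * ((L/2) ^ 2 / (1 - (L/2) ^ 2)))); auto.
      replace ((4 * PI * (s ^ 2 / (1 - s ^ 2))) / (4 * PI * ((L/2) ^ 2 / (1 - (L/2) ^ 2))) * (4 * PI * ((L/2) ^ 2 / (1 - (L/2) ^ 2))))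
        with (4 * PI * (s ^ 2 / (1 - s ^ 2))). exact Hle.
      field. repeat split; nra. }
    eapply Rle_trans. exact Hk. right.
    unfold s.
    assert (E5 : (2 + L * R0) ^ 2 - (L + R0 * 2) ^ 2 = (4 - L^2) * (1 - R0^2)) by ring.
    field. rewrite E5. repeat split; apply Rgt_not_eq; try nra.
    apply Rmult_lt_0_compat; nra.
Qed.
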